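(* Let $J$ and $K$ be nonempty standard subsets of $\{1,\dots,t\}$ such that for every $i\in K$ we have $i\in J$ or $i-1\in J$. Then $\mathrm{Ext}^1_{\mathcal A_{t,1}}(\Delta(K),\Delta(J))=0$.
   Context: Let $k$ be an algebraically closed field and $t\ge 3$ an integer. $\mathcal A_{t,1}$ is the quotient of the path algebra over $k$ of the quiver with vertices $1,\dots,t$, arrows $\alpha_i:i\to i+1$ ($1\le i\le t-1$) and $\beta_j:j+2\to j$ ($1\le j\le t-2$), by the relations $\beta_1\alpha_2=0$ and $\beta_{i+1}\alpha_{i+2}=\alpha_i\beta_i$ for $1\le i\le t-3$ (compositions of linear maps, written right to left). Modules are finite-dimensional and identified with representations $(M_i;\alpha_i,\beta_j)$ of the quiver satisfying these relations. A subset $J\subseteq\{1,\dots,t\}$ is standard if $j\in J$ implies $j+1\notin J$. For a nonempty standard subset $J$, the standard module $\Delta(J)$ has $\Delta(J)_i=k^{l}$ where $l=\#\{j\in J: j\le i\}$, with standard basis $e_1,\dots,e_l$; each $\alpha_i$ is the natural inclusion $e_h\mapsto e_h$, and each $\beta_j$ sends $e_h\mapsto e_{h-1}$ for $h\ge 2$ and $e_1\mapsto 0$. *)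

(* Defs.v *)
(* Representations of the bound quiver of A_{t,1} over a field,
   with linear maps acting on ROW vectors: a map V_i -> V_j is a matrix
   'M_(dim i, dim j), and x |-> x *m A. Composition "b after a" is a *m b. *)
From HB Require Import structures.
From mathcomp Require Import all_boot all_order all_algebra.
Set Implicit Arguments. Unset Strict Implicit. Unset Printing Implicit Defensive.
Import GRing.Theory.
Local Open Scope ring_scope.

Section Reps.
Variables (k : fieldType) (t : nat).

(* vertices are 1..t; alpha_i : i -> i+1 ; beta_j : j+2 -> j *)
Record rep := Rep {
  rdim : nat -> nat;
  ral : forall i, 'M[k]_(rdim i, rdim i.+1);
  rbe : forall j, 'M[k]_(rdim j.+2, rdim j) }.

(* a representation of the bound quiver: spaces only at vertices 1..t,
   relations beta_1 alpha_2 = 0 and beta_{i+1} alpha_{i+2} = alpha_i beta_i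
   for 1 <= i <= t-3 (compositions written right to left). *)
Definition is_rep (M : rep) : Prop :=
  [/\ forall i, (i == 0)%N || (t < i)%N -> rdim M i = 0%N,
      ral M 2 *m rbe M 1 = 0
    & forall i, (1 <= i)%N -> (i <= t - 3)%N ->
        ral M i.+2 *m rbe M i.+1 = rbe M i *m ral M i].

Definition is_hom (M N : rep) (f : forall i, 'M[k]_(rdim M i, rdim N i)) : Prop :=
  (forall i, (1 <= i)%N -> (i < t)%N -> ral M i *m f i.+1 = f i *m ral N i) /\
  (forall j, (1 <= j)%N -> (j.+2 <= t)%N -> rbe M j *m f j = f j.+2 *m rbe N j).

(* Ext^1(M, N) = 0 : every short exact sequence 0 -> N -f-> E -g-> M -> 0
   of representations of the bound quiver splits. *)
Definition Ext1_zero (M N : rep) : Prop :=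
  forall (E : rep) (f : forall i, 'M[k]_(rdim N i, rdim E i))
         (g : forall i, 'M[k]_(rdim E i, rdim M i)),
    is_rep E -> is_hom f -> is_hom g ->
    (forall i, (1 <= i <= t)%N ->
       [/\ row_free (f i), row_full (g i), f i *m g i = 0
         & (kermx (g i) <= f i)%MS]) ->
    exists s : forall i, 'M[k]_(rdim M i, rdim E i),
      is_hom s /\ (forall i, (1 <= i <= t)%N -> s i *m g i = 1%:M).

(* standard subsets of {1,...,t}, encoded as subsets of 'I_t.+1 avoiding 0 *)
Definition standard (J : {set 'I_t.+1}) : Prop :=
  ord0 \notin J /\
  forall j j' : 'I_t.+1, j \in J -> j' \in J -> (j' : nat) <> (j : nat).+1.

Definition std_dim (J : {set 'I_t.+1}) (i : nat) : nat :=
  if (1 <= i <= t)%N then #|[set j in J | ((j : nat) <= i)%N]| else 0%N.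

(* standard module Delta(J): alpha = natural inclusion e_h |-> e_h,
   beta : e_h |-> e_{h-1} (h >= 2), e_1 |-> 0  (0-based indices below) *)
Definition Delta (J : {set 'I_t.+1}) : rep :=
  @Rep (std_dim J)
    (fun i => \matrix_(r, c) ((r : nat) == (c : nat))%:R)
    (fun j => \matrix_(r, c) ((r : nat) == (c : nat).+1)%:R).

End Reps.

(* Main.v *)
Require Import Defs.
From HB Require Import structures.
From mathcomp Require Import all_boot all_order all_algebra.
Set Implicit Arguments. Unset Strict Implicit. Unset Printing Implicit Defensive.
Import GRing.Theory.
Local Open Scope ring_scope.

Section Aux.
Variable k : fieldType.

Lemma sum_delta m a (G : nat -> k) :
  \sum_(i < m) ((i : nat) == a)%:R * G i = (a < m)%N%:R * G a.
Proof.
elim: m => [|m IH]; first by rewrite big_ord0 mul0r.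
rewrite big_ord_recr /= IH.
have -> : (a < m.+1)%N = (a < m)%N || (a == m) by rewrite ltnS leq_eqVlt orbC.
rewrite [(m == a)]eq_sym.
by case: (ltngtP a m) => [h|h|->] /=; rewrite ?mulr1n ?mulr0n ?mul1r ?mul0r ?addr0 ?add0r.
Qed.

Definition ev m r : 'rV[k]_m := \row_(c < m) ((c : nat) == r)%:R.

Lemma ev_mul m n r (F : nat -> nat -> k) : (r < m)%N ->
  ev m r *m (\matrix_(i < m, c < n) F i c) = \row_(c < n) F r c.
Proof.
move=> hr; apply/rowP => c; rewrite !mxE.
rewrite (eq_bigr (fun j : 'I_m => ((j : nat) == r)%:R * F j c)); last first.
  by move=> j _; rewrite !mxE.
by rewrite (@sum_delta _ _ (fun j => F j c)) hr mul1r.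
Qed.

Lemma ev_rows m n r (u : nat -> 'rV[k]_n) : (r < m)%N ->
  ev m r *m (\matrix_(i < m) u i) = u r.
Proof.
move=> hr; apply/rowP => c; rewrite !mxE.
rewrite (eq_bigr (fun j : 'I_m => ((j : nat) == r)%:R * u j 0 c)); last first.
  by move=> j _; rewrite !mxE.
by rewrite (@sum_delta _ _ (fun j => u j 0 c)) hr mul1r.
Qed.

Lemma ev_ral m n r : (r < m)%N ->
  ev m r *m (\matrix_(i < m, c < n) ((i : nat) == c)%:R) = ev n r.
Proof.
move=> hr; rewrite (@ev_mul m n r (fun a b => (a == b)%:R)) //.
by apply/rowP => c; rewrite !mxE eq_sym.
Qed.

Lemma ev_rbe m n r : (r < m)%N ->
  ev m r *m (\matrix_(i < m, c < n) ((i : nat) == c.+1)%:R) =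
  if r is r'.+1 then ev n r' else 0.
Proof.
move=> hr; rewrite (@ev_mul m n r (fun a b => (a == b.+1)%:R)) //.
case: r hr => [|r] hr; apply/rowP => c; rewrite !mxE //.
by rewrite eqSS eq_sym.
Qed.

Lemma row_ral m n (r : 'I_m) :
  row r (\matrix_(i < m, c < n) ((i : nat) == c)%:R) = ev n r.
Proof. by apply/rowP => c; rewrite !mxE eq_sym. Qed.

Lemma row_rbe m n (r : 'I_m) :
  row r (\matrix_(i < m, c < n) ((i : nat) == c.+1)%:R) =
  if (r : nat) is r'.+1 then ev n r' else 0.
Proof.
case: r => [[|r] hr]; apply/rowP => c; rewrite !mxE //=.
by rewrite eqSS eq_sym.
Qed.

End Aux.

Section Count.
Variable t : nat.
Local Open Scope nat_scope.
Definition cnt (S : {set 'I_t.+1}) n := #|[set j in S | (j : nat) <= n]|.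

Lemma a_le1 (S : {set 'I_t.+1}) n : #|[set j in S | (j : nat) == n]| <= 1.
Proof.
apply: (@leq_trans #|[set (inord n : 'I_t.+1)]|); last by rewrite cards1.
apply: subset_leq_card; apply/subsetP => j; rewrite !inE => /andP[_ /eqP <-].
by rewrite inord_val.
Qed.

Lemma a_pos (S : {set 'I_t.+1}) n : 0 < #|[set j in S | (j : nat) == n]| ->
  exists2 j, j \in S & (j : nat) = n.
Proof.
rewrite card_gt0 => /set0Pn [j]; rewrite !inE => /andP[h /eqP e]; by exists j.
Qed.

Lemma a_pos' (S : {set 'I_t.+1}) n : (exists2 j, j \in S & (j : nat) = n) ->
  0 < #|[set j in S | (j : nat) == n]|.
Proof.
move=> [j hj e]; rewrite card_gt0; apply/set0Pn; exists j; by rewrite !inE hj e eqxx.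
Qed.

Lemma cntS (S : {set 'I_t.+1}) n : cnt S n.+1 = cnt S n + #|[set j in S | (j : nat) == n.+1]|.
Proof.
rewrite /cnt.
have -> : [set j in S | (j : nat) <= n.+1] =
   [set j in S | (j : nat) <= n] :|: [set j in S | (j : nat) == n.+1].
  apply/setP => j; rewrite !inE leq_eqVlt ltnS; case: (j \in S) => //=.
  by rewrite orbC.
rewrite cardsU.
have -> : #|[set j in S | (j : nat) <= n] :&: [set j in S | (j : nat) == n.+1]| = 0%N.
  apply/eqP; rewrite cards_eq0; apply/eqP/setP => j; rewrite !inE.
  case: (j \in S) => //=; apply/negP => /andP[h /eqP e]; move: h; by rewrite e ltnn.
by rewrite subn0.
Qed.

Lemma cnt_mono (S : {set 'I_t.+1}) n : cnt S n <= cnt S n.+1.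
Proof. by rewrite cntS leq_addr. Qed.

Lemma cnt_lt (S : {set 'I_t.+1}) n : cnt S n < cnt S n.+1 -> exists2 j, j \in S & (j : nat) = n.+1.
Proof. by rewrite cntS -{1}[cnt S n]addn0 ltn_add2l => /a_pos. Qed.

Lemma cnt_gt (S : {set 'I_t.+1}) n : (exists2 j, j \in S & (j : nat) = n.+1) -> cnt S n < cnt S n.+1.
Proof. by move=> h; rewrite cntS -{1}[cnt S n]addn0 ltn_add2l a_pos'. Qed.

Lemma cnt0 (S : {set 'I_t.+1}) : standard S -> cnt S 0 = 0%N.
Proof.
move=> [h0 _]; apply/eqP; rewrite cards_eq0; apply/eqP/setP => j; rewrite !inE.
case: (boolP (j \in S)) => //= hj; rewrite leqn0; apply/negP => /eqP hj0.
have ej : j = ord0 by apply/val_inj.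
by move: h0; rewrite -ej hj.
Qed.

Lemma cnt2 (S : {set 'I_t.+1}) n : standard S -> cnt S n.+2 <= cnt S n + 1.
Proof.
move=> [_ hs]; rewrite !cntS -addnA leq_add2l.
have h1 := a_le1 S n.+1; have h2 := a_le1 S n.+2.
case E1 : #|[set j in S | (j : nat) == n.+1]| h1 => [|[|//]] _; first by rewrite add0n.
case E2 : #|[set j in S | (j : nat) == n.+2]| h2 => [|[|//]] _; first by [].
have [j1 hj1 e1] := a_pos (ltac:(by rewrite E1) : 0 < #|[set j in S | (j : nat) == n.+1]|).
have [j2 hj2 e2] := a_pos (ltac:(by rewrite E2) : 0 < #|[set j in S | (j : nat) == n.+2]|).
by case: (hs j1 j2 hj1 hj2); rewrite e1 e2.
Qed.

Lemma std_in (S : {set 'I_t.+1}) i : (1 <= i <= t)%N -> std_dim S i = cnt S i.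
Proof. by rewrite /std_dim => ->. Qed.

End Count.
Local Open Scope ring_scope.

Section Main.
Variables (k : fieldType) (t : nat) (J K : {set 'I_t.+1}) (E : rep k).
Variables (f : forall i, 'M[k]_(rdim (Delta k J) i, rdim E i))
          (g : forall i, 'M[k]_(rdim E i, rdim (Delta k K) i)).

Local Notation dK := (std_dim K).
Local Notation dJ := (std_dim J).

Definition Bsh n : 'M[k]_(dJ n, dJ n.+2) := \matrix_(c, r) ((r : nat) == c.+1)%:R.

Definition newlift n (A : nat -> 'rV[k]_(rdim E n)) (r : nat) : 'rV[k]_(rdim E n.+2) :=
  let y0 := ev k (dK n.+2) r *m pinvmx (g n.+2) in
  let T := if r is r'.+1 then A r' else 0 in
  let d := y0 *m rbe E n - T in
  y0 - d *m pinvmx (f n) *m Bsh n *m f n.+2.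

Definition step n (A : nat -> 'rV[k]_(rdim E n)) (B : nat -> 'rV[k]_(rdim E n.+1)) :
  nat -> 'rV[k]_(rdim E n.+2) :=
  fun r => if (r < dK n.+1)%N then B r *m ral E n.+1 else newlift A r.

Fixpoint XP n : (nat -> 'rV[k]_(rdim E n)) * (nat -> 'rV[k]_(rdim E n.+1)) :=
  if n is n'.+1 then ((XP n').2, step (XP n').1 (XP n').2)
  else (fun _ => 0, fun r => ev k (dK 1) r *m pinvmx (g 1)).

Definition X n := (XP n).1.

Lemma XSS n : X n.+2 = step (X n) (X n.+1).
Proof. by []. Qed.

Definition sec i : 'M[k]_(rdim (Delta k K) i, rdim E i) := \matrix_(r < dK i) X i r.

Hypothesis Hrep : is_rep t E.
Hypothesis Hf : @is_hom k t (Delta k J) E f.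
Hypothesis Hg : @is_hom k t E (Delta k K) g.
Hypothesis Hex : forall i, (1 <= i <= t)%N ->
  [/\ row_free (f i), row_full (g i), f i *m g i = 0 & (kermx (g i) <= f i)%MS].
Hypothesis stK : standard K.
Hypothesis stJ : standard J.
Hypothesis Hcov : forall i : 'I_t.+1, i \in K ->
     i \in J \/ exists2 j : 'I_t.+1, j \in J & (j : nat).+1 = i.

Lemma dK_mono i : (1 <= i)%N -> (i < t)%N -> (dK i <= dK i.+1)%N.
Proof.
move=> h1 h2; rewrite !std_in ?cnt_mono //; apply/andP; split=> //; exact: ltnW.
Qed.

Lemma dK2 i : (1 <= i)%N -> (i.+2 <= t)%N -> (dK i.+2 <= dK i + 1)%N.
Proof.
move=> h1 h2; rewrite !std_in ?cnt2 //; apply/andP; split=> //.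
by apply: leq_trans h2; rewrite ltnW.
Qed.

Lemma dK2_0 : (2 <= t)%N -> (dK 2 <= 1)%N.
Proof.
move=> h; rewrite std_in //; have := cnt2 0 stK; by rewrite cnt0.
Qed.

Lemma dJ_gt j : (1 <= j)%N -> (j.+2 <= t)%N -> (dK j.+1 < dK j.+2)%N ->
  (dJ j < dJ j.+2)%N.
Proof.
move=> h1 h2; have h3 : (j.+1 <= t)%N by exact: ltnW.
have h4 : (j <= t)%N by exact: ltnW.
rewrite !std_in ?h1 ?h2 ?h3 ?h4 // => /cnt_lt [k0 hk0 e].
case: (Hcov hk0) => [hJ|[j' hj' e']].
  apply: (leq_ltn_trans (cnt_mono J j)); apply: cnt_gt; by exists k0.
apply: (leq_trans _ (cnt_mono J j.+1)); apply: cnt_gt; exists j' => //.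
by move: e'; rewrite e => -[].
Qed.

Lemma P2 i r : (1 <= i)%N -> (r < dK i)%N -> X i r *m ral E i = X i.+1 r.
Proof. by case: i => // i _ hr; rewrite /= XSS /step hr. Qed.

Lemma P1 i r : (1 <= i <= t)%N -> (r < dK i)%N -> X i r *m g i = ev k (dK i) r.
Proof.
elim: i r => [|i IH] r; first by [].
case: i IH => [|i] IH hi hr.
  rewrite /X /= mulmxKpV //; apply: submx_full; by case: (Hex hi).
rewrite XSS /step; case: ifP => h.
- have hi1 : (1 <= i.+1 <= t)%N by case/andP: hi => _ h0; rewrite /= ltnW.
  rewrite -mulmxA (proj1 Hg) //.
  by rewrite mulmxA IH // /= ev_ral.
- rewrite /newlift /= mulmxBl mulmxKpV; last by apply: submx_full; case: (Hex hi).
  by rewrite -[X in _ - X]mulmxA; case: (Hex hi) => _ _ -> _; rewrite mulmx0 subr0.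
Qed.

Lemma hBsh j : (dJ j < dJ j.+2)%N -> Bsh j *m rbe (Delta k J) j = 1%:M.
Proof.
move=> hm; apply/matrixP => c c'; rewrite !mxE.
rewrite (eq_bigr (fun r : 'I__ => ((r : nat) == c.+1)%:R * ((r : nat) == c'.+1)%:R)); last first.
  by move=> r _; rewrite !mxE.
rewrite (@sum_delta k _ _ (fun r => (r == c'.+1)%:R)).
have -> : (c.+1 < dJ j.+2)%N by apply: leq_ltn_trans hm; exact: ltn_ord.
by rewrite mul1r eqSS.
Qed.

Lemma P3 j r : (1 <= j)%N -> (j.+2 <= t)%N -> (r < dK j.+2)%N ->
  X j.+2 r *m rbe E j = if r is r'.+1 then X j r' else 0.
Proof.
elim/ltn_ind: j r => j IH r hj hjt hr.
rewrite XSS /step; case: ifP => h.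
- case: j IH hj hjt hr h => [//|j] IH _ hjt hr h.
  case: j IH hjt hr h => [|j] IH hjt hr h.
  + rewrite -mulmxA; case: Hrep => _ -> _; rewrite mulmx0.
    case: r hr h => // r _ h.
    have := dK2_0 (ltnW hjt); by move/(leq_trans h).
  + case: Hrep => _ _ Hrel.
    rewrite -mulmxA Hrel //; last first.
      by rewrite leq_subRL ?addn3 // (leq_trans _ hjt).
    rewrite mulmxA (IH j.+1) //; last exact: ltnW.
    case: r hr h => [|r] hr h; first by rewrite mul0mx.
    rewrite P2 //.
    have := dK2 (isT : (1 <= j.+1)%N) (ltnW hjt).
    by rewrite addn1 => h2; move: (leq_trans h h2); rewrite ltnS.
- have hlt : (dK j.+1 < dK j.+2)%N by apply: leq_ltn_trans hr; rewrite leqNgt h.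
  have hm := dJ_gt hj hjt hlt.
  have hjt' : (1 <= j <= t)%N by rewrite hj; apply: leq_trans hjt; rewrite ltnW.
  rewrite /newlift /=.
  set y0 := ev k (dK j.+2) r *m pinvmx (g j.+2).
  set T := (match r with 0 => 0 | r'.+1 => X j r' end).
  set d := y0 *m rbe E j - T.
  have hd : d *m g j = 0.
    rewrite /d mulmxBl -mulmxA (proj2 Hg) // mulmxA /y0 mulmxKpV; last first.
      by apply: submx_full; case: (Hex (i := j.+2) _) => //; rewrite hjt.
    rewrite /= ev_rbe // /T.
    case: r hr h {hlt y0 T d} => [|r] hr h; first by rewrite mul0mx subr0.
    rewrite P1 ?subrr //.
    have := dK2 hj hjt; by rewrite addn1 => h2; move: (leq_trans hr h2); rewrite ltnS.
  have hdf : (d <= f j)%MS.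
    apply: submx_trans (_ : kermx (g j) <= f j)%MS; first by apply/sub_kermxP.
    by case: (Hex hjt').
  rewrite mulmxBl -[X in _ - X]mulmxA -(proj2 Hf) // mulmxA.
  rewrite -[(_ *m Bsh j) *m _]mulmxA hBsh // mulmx1 mulmxKpV //.
  by rewrite /d opprB addrC subrK.
Qed.

Lemma sec_hom : @is_hom k t (Delta k K) E sec.
Proof.
split.
- move=> i h1 h2; apply/row_matrixP => r; rewrite !row_mul /sec rowK /= row_ral.
  rewrite ev_rows ?P2 //; apply: leq_trans (dK_mono h1 h2); exact: ltn_ord.
- move=> j h1 h2; apply/row_matrixP => r; rewrite !row_mul /sec rowK /= row_rbe.
  rewrite P3 //; case: r => [[|r] hr] /=; first by rewrite mul0mx.
  rewrite ev_rows //.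
  have := dK2 h1 h2; by rewrite addn1 => h3; move: (leq_trans hr h3); rewrite ltnS.
Qed.

Lemma sec_id i : (1 <= i <= t)%N -> sec i *m g i = 1%:M.
Proof.
move=> hi; apply/row_matrixP => r; rewrite row_mul /sec rowK P1 // row1.
by apply/rowP => c; rewrite !mxE eqxx /=.
Qed.

End Main.

Theorem lemma2p6 (k : closedFieldType) (t : nat) (J K : {set 'I_t.+1}) :
  (3 <= t)%N ->
  @standard t J -> @standard t K ->
  J != set0 -> K != set0 ->
  (forall i : 'I_t.+1, i \in K ->
     i \in J \/ exists2 j : 'I_t.+1, j \in J & (j : nat).+1 = i) ->
  @Ext1_zero k t (@Delta k t K) (@Delta k t J).
Proof.
move=> t3 stJ stK _ _ Hcov E f g Hrep Hf Hg Hex.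
exists (@sec k t J K E f g); split.
- by apply: sec_hom.
- by move=> i hi; apply: sec_id.
Qed.
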